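(* Let $r \geq 1$ be an integer. Then for every integer $n \geq 0$, $$\sum_{k=0}^{n} \frac{s(n,k)}{k+r} = \sum_{k=0}^{r-1} \lambda_{r,n,k}\, B_{n+k}^*,$$ where for each $k \in \{0,1,\dots,r-1\}$, $$\lambda_{r,n,k} := \sum_{\ell=0}^{r-1-k} \binom{r-1}{\ell} S(r-1-\ell,k)\, n^{\ell}$$ (with the convention $0^0 = 1$).
   Context: For $n \geq 0$, $X^{\underline{n}} := X(X-1)\cdots(X-n+1)$ ($X^{\underline{0}}=1$). The (signed) Stirling numbers of the first kind $s(n,k)$ are defined by $X^{\underline{n}} = \sum_{k=0}^{n} s(n,k) X^k$, and the Stirling numbers of the second kind $S(n,k)$ by $X^n = \sum_{k=0}^{n} S(n,k) X^{\underline{k}}$ (for all $n\ge 0$), with $s(n,k)=S(n,k)=0$ when $n<k$; in particular $S(0,0)=1$. The Bernoulli numbers of the second kind $B_n^*$ are defined by $\frac{t}{\log(1+t)} = \sum_{n \ge 0} B_n^* \frac{t^n}{n!}$ (equivalently $B_n^* = \int_0^1 x^{\underline{n}}\,dx$). *)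

(* Defs.v *)
From mathcomp Require Import all_boot all_order all_algebra.
Set Implicit Arguments. Unset Strict Implicit. Unset Printing Implicit Defensive.
Import Order.TTheory GRing.Theory Num.Theory.
Local Open Scope ring_scope.

Definition falling_poly (n : nat) : {poly rat} := \prod_(i < n) ('X - (i%:R)%:P).

(* Signed Stirling numbers of the first kind: coefficient of X^k in X^{\underline n}
   (zero automatically when k > n). *)
Definition stirling1 (n k : nat) : rat := (falling_poly n)`_k.

Fixpoint stirling2 (n k : nat) : nat :=
  match n, k with
  | 0, 0 => 1
  | 0, _.+1 => 0
  | _.+1, 0 => 0
  | m.+1, j.+1 => j.+1 * stirling2 m j.+1 + stirling2 m j
  end%N.

Definition int01 (p : {poly rat}) : rat := \sum_(i < size p) p`_i / (i.+1)%:R.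

Definition bstar (n : nat) : rat := int01 (falling_poly n).

Definition lambda (r n k : nat) : rat :=
  \sum_(l < (r - k)%N) ('C(r.-1, l))%:R * (stirling2 (r.-1 - l) k)%:R * (n%:R) ^+ l.

(* Main.v *)
Require Import Defs.
From mathcomp Require Import all_boot all_order all_algebra ring.
Import GRing.Theory Num.Theory.
Local Open Scope ring_scope.

Lemma size_falling m : size (falling_poly m) = m.+1.
Proof. by rewrite /falling_poly size_prod_XsubC; congr S; rewrite -[RHS]card_ord cardE enumT. Qed.

Lemma stir2_0 m k : (m < k)%N -> stirling2 m k = 0%N.
Proof.
elim: m k => [|m IH] [|k] //= H.
by rewrite !IH // ?muln0 // ltnW.
Qed.

Definition G (n k : nat) : {poly rat} := \prod_(i < k) ('X - (n + i)%:R%:P).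

Lemma XG n k : ('X - n%:R%:P) * G n k = G n k.+1 + k%:R *: G n k.
Proof.
rewrite /G big_ord_recr /= -mul_polyC natrD rmorphD /=.
ring.
Qed.

Lemma Tpow n N m : (m < N)%N ->
  ('X - n%:R%:P) ^+ m = \sum_(k < N) (stirling2 m k)%:R *: G n k.
Proof.
elim: m N => [|m IH] [|N] // H.
  rewrite big_ord_recl /= big1 ?addr0 ?scale1r ?expr0 /G ?big_ord0 //.
  by move=> i _; rewrite /= scale0r.
rewrite exprS (IH N.+1) ?(ltnW H) // mulr_sumr.
under eq_bigr => k _ do rewrite -scalerAr XG scalerDr scalerA.
rewrite big_split /= [RHS]big_ord_recl /= scale0r add0r.
rewrite [in RHS](eq_bigr (fun k : 'I_N => (k.+1%:R * (stirling2 m k.+1)%:R) *: G n k.+1 + (stirling2 m k)%:R *: G n k.+1)); last first.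
  by move=> k _; rewrite /bump /= add1n natrD natrM scalerDl.
rewrite big_split /= addrC; congr (_ + _).
  by rewrite big_ord_recl /= mulr0 scale0r add0r; apply: eq_bigr => k _; rewrite /bump /= add1n mulrC.
by rewrite big_ord_recr /= stir2_0 // scale0r addr0.
Qed.
From mathcomp Require Import zify.

Lemma lam_ext r' n (k : 'I_r'.+1) : lambda r'.+1 n k =
  \sum_(l < r'.+1) ('C(r', l))%:R * (stirling2 (r' - l) k)%:R * (n%:R) ^+ l.
Proof.
rewrite /lambda /= (big_ord_widen r'.+1 (fun l => ('C(r', l))%:R * (stirling2 (r' - l) k)%:R * (n%:R : rat) ^+ l)); last by lia.
rewrite big_mkcond /=; apply: eq_bigr => l _.
case: ifP => // Hl; rewrite stir2_0 ?mulr0 ?mul0r //.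
have := ltn_ord k; have := ltn_ord l; move/negbT: Hl; lia.
Qed.

Lemma fallD n k : falling_poly (n + k) = falling_poly n * G n k.
Proof. by rewrite /falling_poly big_split_ord. Qed.

Lemma key r' n : 'X^r' * falling_poly n =
  \sum_(k < r'.+1) lambda r'.+1 n k *: falling_poly (n + k).
Proof.
under eq_bigr => k _ do rewrite lam_ext fallD scalerAr.
rewrite -mulr_sumr mulrC; congr (_ * _).
under eq_bigr => k _ do rewrite scaler_suml.
rewrite exchange_big /=.
have -> : ('X : {poly rat}) = ('X - n%:R%:P) + n%:R%:P by rewrite subrK.
rewrite exprDn; apply: eq_bigr => l _.
rewrite (Tpow n r'.+1) ?ltnS ?leq_subr // mulr_suml -sumrMnl.
apply: eq_bigr => k _.
rewrite -!mul_polyC !rmorphM /= !rmorphXn /= -mulr_natr !mul1r !polyC_natr. ring.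
Qed.

Definition L (N : nat) (p : {poly rat}) : rat := \sum_(i < N) p`_i / (i.+1)%:R.

Lemma int01_L N (p : {poly rat}) : (size p <= N)%N -> int01 p = L N p.
Proof.
move=> H; rewrite /int01 /L (big_ord_widen N (fun i => p`_i / (i.+1)%:R)) //.
rewrite big_mkcond /=; apply: eq_bigr => i _.
by case: ifP => // /negbT; rewrite -leqNgt => Hi; rewrite nth_default ?mul0r.
Qed.

Lemma L_lin N (I : Type) (s : seq I) (c : I -> rat) (F : I -> {poly rat}) :
  L N (\sum_(k <- s) c k *: F k) = \sum_(k <- s) c k * L N (F k).
Proof.
rewrite /L; under eq_bigr => i _ do rewrite coef_sum mulr_suml.
rewrite exchange_big /=; apply: eq_bigr => k _.
by rewrite mulr_sumr; apply: eq_bigr => i _; rewrite coefZ mulrA.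
Qed.

Theorem theorem6 (r : nat) (hr : (1 <= r)%N) (n : nat) :
  \sum_(k < n.+1) stirling1 n k / (k + r)%:R
  = \sum_(k < r) lambda r n k * bstar (n + k).
Proof.
case: r hr => [//|r'] _.
transitivity (L (r' + n.+1) ('X^r' * falling_poly n)).
  rewrite /L big_split_ord /= [X in _ = X + _]big1 ?add0r; last first.
    by move=> i _; rewrite coefXnM ltn_ord mul0r.
  apply: eq_bigr => k _; rewrite coefXnM /= ltnNge leq_addr /= addKn /stirling1.
  congr (_ / _%:R); lia.
rewrite key L_lin; apply: eq_bigr => k _; congr (_ * _).
rewrite /bstar (int01_L (r' + n.+1)) // size_falling.
have := ltn_ord k; lia.
Qed.
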